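(* Let $\mathcal{C}$ be a prevariety over a finite alphabet $A$ and let $\alpha:A^*\to M$ be a morphism into a finite monoid. If $(s_1,t_1),(s_2,t_2)\in M^2$ are $\mathcal{C}$-pairs for $\alpha$, then $(s_1s_2,t_1t_2)$ is a $\mathcal{C}$-pair for $\alpha$.
   Context: Fix a finite alphabet $A$. A prevariety is a class of regular languages over $A$ containing $\emptyset$ and $A^*$, closed under union, intersection, complement, and under the quotients $u^{-1}L=\{w\mid uw\in L\}$ and $Lu^{-1}=\{w\mid wu\in L\}$. A language $L_1$ is $\mathcal{C}$-separable from $L_2$ if some $K\in\mathcal{C}$ satisfies $L_1\subseteq K$ and $K\cap L_2=\emptyset$. For a morphism $\alpha:A^*\to M$, a pair $(s,t)\in M^2$ is a $\mathcal{C}$-pair for $\alpha$ if $\alpha^{-1}(s)$ is not $\mathcal{C}$-separable from $\alpha^{-1}(t)$. *)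

(* Defs.v *)
From mathcomp Require Import all_boot.
Set Implicit Arguments. Unset Strict Implicit. Unset Printing Implicit Defensive.

Definition lang (A : finType) := seq A -> Prop.

Record dfa (A : finType) := DFA {
  dfa_state : finType;
  dfa_init : dfa_state;
  dfa_delta : dfa_state -> A -> dfa_state;
  dfa_final : pred dfa_state }.

Definition dfa_accept (A : finType) (D : dfa A) (w : seq A) : bool :=
  @dfa_final A D (foldl (@dfa_delta A D) (@dfa_init A D) w).

Definition regular (A : finType) (L : lang A) : Prop :=
  exists D : dfa A, forall w, L w <-> dfa_accept D w.

Definition lquot (A : finType) (u : seq A) (L : lang A) : lang A :=
  fun w => L (u ++ w).
Definition rquot (A : finType) (L : lang A) (u : seq A) : lang A :=
  fun w => L (w ++ u).

Definition prevariety (A : finType) (C : lang A -> Prop) : Prop :=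
  (forall L, C L -> regular L) /\
  C (fun _ => False) /\
  C (fun _ => True) /\
  (forall L1 L2, C L1 -> C L2 -> C (fun w => L1 w \/ L2 w)) /\
  (forall L1 L2, C L1 -> C L2 -> C (fun w => L1 w /\ L2 w)) /\
  (forall L, C L -> C (fun w => ~ L w)) /\
  (forall L u, C L -> C (lquot u L)) /\
  (forall L u, C L -> C (rquot L u)).

Definition separable (A : finType) (C : lang A -> Prop) (L1 L2 : lang A) : Prop :=
  exists K, C K /\ (forall w, L1 w -> K w) /\ (forall w, K w -> L2 w -> False).

Definition is_monoid (M : finType) (mul : M -> M -> M) (one : M) : Prop :=
  [/\ (forall x y z, mul x (mul y z) = mul (mul x y) z),
      (forall x, mul one x = x) & (forall x, mul x one = x)].

Definition is_morphism (A : finType) (M : finType) (mul : M -> M -> M) (one : M)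
    (alpha : seq A -> M) : Prop :=
  alpha [::] = one /\ (forall u v, alpha (u ++ v) = mul (alpha u) (alpha v)).

Definition Cpair (A : finType) (C : lang A -> Prop) (M : finType)
    (alpha : seq A -> M) (s t : M) : Prop :=
  ~ separable C (fun w => alpha w = s) (fun w => alpha w = t).

(* Main.v *)
Require Import Defs.
From mathcomp Require Import all_boot.
From Stdlib Require Import Classical.

Lemma not_sep_witness (A : finType) (C : lang A -> Prop) (L1 L2 K : lang A) :
  ~ separable C L1 L2 -> C K -> (forall w, L1 w -> K w) -> exists w, K w /\ L2 w.
Proof.
move=> ns CK inc; apply: NNPP => H; apply: ns; exists K; split=> //; split=> //.
by move=> w Kw L2w; apply: H; exists w.
Qed.

Theorem lemma5p4 (A : finType) (C : lang A -> Prop) (M : finType)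
    (mul : M -> M -> M) (one : M) (alpha : seq A -> M)
    (s1 t1 s2 t2 : M) :
  prevariety C -> is_monoid mul one -> is_morphism mul one alpha ->
  Cpair C alpha s1 t1 -> Cpair C alpha s2 t2 ->
  Cpair C alpha (mul s1 s2) (mul t1 t2).
Proof.
move=> [Creg [C0 [C1 [CU [CI [CN [CL CR]]]]]]] _ [_ am] P1 P2 [K [CK [inc disj]]].
have [D HD] := Creg K CK.
pose reach (u : seq A) := foldl (@dfa_delta A D) (@dfa_init A D) u.
have step : forall q, exists Lq, C Lq /\
   (forall u, alpha u = s1 -> reach u = q -> Lq u) /\
   (forall w, Lq w -> exists v, alpha v = t2 /\ K (w ++ v)).
  move=> q; case: (classic (exists u, alpha u = s1 /\ reach u = q)).
    move=> [u [au ru]].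
    have [w [Kw aw]] := @not_sep_witness _ _ _ _ (lquot u K) P2 (CL K u CK)
      (fun w aw => inc (u ++ w) (etrans (am u w) (f_equal2 mul au aw))).
    exists (rquot K w); split; first exact: CR.
    split; last by move=> w' Kw'; exists w.
    move=> u' au' ru'; rewrite /rquot HD /dfa_accept foldl_cat.
    move: Kw; rewrite /lquot HD /dfa_accept foldl_cat.
    by rewrite -/(reach u) -/(reach u') ru ru'.
  move=> nex; exists (fun _ => False); split=> //; split=> // u au ru.
  by apply: nex; exists u.
have big : forall l : seq (dfa_state D), exists L, C L /\
   (forall u, alpha u = s1 -> reach u \in l -> L u) /\
   (forall w, L w -> exists v, alpha v = t2 /\ K (w ++ v)).
  elim=> [|q l [L [CLl [Li Lo]]]].
    by exists (fun _ => False); split=> //; split=> // u _.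
  have [Lq [CLq [Lqi Lqo]]] := step q.
  exists (fun w => Lq w \/ L w); split; first exact: CU.
  split.
    move=> u au; rewrite in_cons => /orP [/eqP rq|rl]; first by left; apply: Lqi.
    by right; apply: Li.
  by move=> w [/Lqo|/Lo].
have [L [CLL [Li Lo]]] := big (enum (dfa_state D)).
have [w [Lw aw]] : exists w, L w /\ alpha w = t1.
  have [w [Lw aw]] := @not_sep_witness _ _ _ _ L P1 CLL
      (fun u au => Li u au (mem_enum _ _)).
  by exists w.
have [v [av Kwv]] := Lo w Lw.
by apply: (disj (w ++ v)) => //; rewrite am aw av.
Qed.
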